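(* Let $r>0$, $L\ge2$ with $rL\in\mathbb{N}$, and let $\eta^L\sim\nu_L$, the stationary distribution of the RBB process with $L$ bins and $N=rL$ balls. Writing $w_k(\eta):=\mathbf{1}(\eta_k>0)$, $$\mathrm{Cov}\big(w_1(\eta^L),w_2(\eta^L)\big)=-\mathbb{E}\big(w_1(\eta^L)\big)^2+2\,\mathbb{E}\big(w_1(\eta^L)\big)\frac{(r+1)L-1}{L-1}-2r\frac{L}{L-1}.$$
   Context: RBB process with $L$ bins: Markov chain on $\mathbb{Z}_+^L$; with $w(\eta):=(\mathbf{1}(\eta_1>0),\dots,\mathbf{1}(\eta_L>0))$ and $K(\eta):=\sum_j\mathbf{1}(\eta_j>0)$, from state $\eta$ the next state is $\eta-w(\eta)+B(\eta)$ where $B(\eta)$ is multinomial with $K(\eta)$ trials and cell probabilities $(1/L,\dots,1/L)$. It conserves the total number of balls, and restricted to configurations with $N$ balls it is an ergodic finite Markov chain with a unique stationary distribution $\nu_L$, which is exchangeable. *)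

(* Defs.v *)
From HB Require Import structures.
From mathcomp Require Import all_boot all_order all_algebra.
Set Implicit Arguments. Unset Strict Implicit. Unset Printing Implicit Defensive.
Import Order.TTheory GRing.Theory Num.Theory.
Local Open Scope ring_scope.

(* Configurations of the RBB process with L bins and (at most) N balls per bin.
   eta i is the number of balls in bin i (bins indexed 0..L-1).  The stationary
   distribution is supported on configurations with exactly N balls in total,
   where every bin automatically holds at most N balls, so no truncation occurs. *)
Definition config (L N : nat) := {ffun 'I_L -> 'I_N.+1}.

Definition occ (L N : nat) (eta : config L N) (i : 'I_L) : nat := (0 < eta i)%N.

Definition Kocc (L N : nat) (eta : config L N) : nat := (\sum_i occ eta i)%N.

Definition ballsum (L N : nat) (eta : config L N) : nat := (\sum_i (eta i : nat))%N.

(* One-step transition probability: eta' = eta - w(eta) + B with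
   B ~ Multinomial(K(eta); 1/L,...,1/L). *)
Definition rbb_P (R : realFieldType) (L N : nat) (eta eta' : config L N) : R :=
  let b i := ((eta' i : nat) + occ eta i - eta i)%N in
  if [forall i, (eta i : nat) <= eta' i + occ eta i]%N
     && ((\sum_i b i)%N == Kocc eta)
  then (Kocc eta)`!%:R / (\prod_i (b i)`!)%:R / (L%:R ^+ Kocc eta)
  else 0.

Definition rbb_stationary (R : realFieldType) (L N : nat) (pi : config L N -> R) :=
  [/\ forall eta, 0 <= pi eta,
      forall eta, ballsum eta != N -> pi eta = 0,
      \sum_eta pi eta = 1 &
      forall eta', pi eta' = \sum_eta pi eta * rbb_P R eta eta'].

Definition Exp (R : realFieldType) (L N : nat) (pi : config L N -> R)
  (f : config L N -> R) : R := \sum_eta pi eta * f eta.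

(* Main.v *)
Require Import Defs.
From HB Require Import structures.
From mathcomp Require Import all_boot all_order all_algebra.
From mathcomp Require Import fingroup perm.
From mathcomp Require Import zify ring lra.
Set Implicit Arguments. Unset Strict Implicit. Unset Printing Implicit Defensive.
Import Order.TTheory GRing.Theory Num.Theory.
Local Open Scope ring_scope.

Section Tuples.
Variable L : nat.
Definition cnt n (f : {ffun 'I_n -> 'I_L}) (a : 'I_L) : nat := (\sum_k (f k == a))%N.
Definition consf n (a : 'I_L) (f : {ffun 'I_n -> 'I_L}) : {ffun 'I_n.+1 -> 'I_L} :=
  [ffun i => if unlift ord0 i is Some j then f j else a].
Definition uncons n (f : {ffun 'I_n.+1 -> 'I_L}) : 'I_L * {ffun 'I_n -> 'I_L} :=
  (f ord0, [ffun j => f (lift ord0 j)]).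

Lemma consf0 n a (f : {ffun 'I_n -> 'I_L}) : consf a f ord0 = a.
Proof. by rewrite ffunE unlift_none. Qed.
Lemma consfS n a (f : {ffun 'I_n -> 'I_L}) j : consf a f (lift ord0 j) = f j.
Proof. by rewrite ffunE liftK. Qed.

Lemma cnt_consf n a (f : {ffun 'I_n -> 'I_L}) b :
  cnt (consf a f) b = ((a == b) + cnt f b)%N.
Proof.
by rewrite /cnt big_ord_recl consf0; congr (_ + _)%N; apply: eq_bigr => j _; rewrite consfS.
Qed.

Lemma sum_split (T : Type) (idx : T) (op : Monoid.com_law idx) n
  (F : {ffun 'I_n.+1 -> 'I_L} -> T) :
  \big[op/idx]_f F f = \big[op/idx]_a \big[op/idx]_(g : {ffun 'I_n -> 'I_L}) F (consf a g).
Proof.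
rewrite pair_big /=.
rewrite (reindex (fun p : 'I_L * {ffun 'I_n -> 'I_L} => consf p.1 p.2)) //.
apply: onW_bij; exists (@uncons n) => [[a g] | f] /=.
- rewrite /uncons consf0; congr pair; apply/ffunP => j; by rewrite ffunE consfS.
- apply/ffunP => i; rewrite ffunE; case: unliftP => [j -> | ->]; by rewrite ?ffunE.
Qed.

Lemma sum_cnt n (f : {ffun 'I_n -> 'I_L}) : (\sum_a cnt f a)%N = n.
Proof.
rewrite /cnt exchange_big /=.
rewrite (eq_bigr (fun _ => 1%N)); last first.
  move=> k _; rewrite (bigD1 (f k)) //= eqxx big1 // => a; rewrite eq_sym => /negPf ->//.
by rewrite sum1_card card_ord.
Qed.

Lemma fiber n (b : 'I_L -> nat) : (\sum_a b a)%N = n ->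
  ((\sum_(f : {ffun 'I_n -> 'I_L}) [forall a, cnt f a == b a]) * \prod_a (b a)`!)%N = n`!.
Proof.
elim: n b => [|n IH] b Hb.
  have b0 : forall a, b a = 0%N.
    by move=> a; apply/eqP; rewrite -leqn0 -Hb (bigD1 a) //= leq_addr.
  rewrite [X in (_ * X)%N]big1 ?muln1; last by move=> a _; rewrite b0.
  rewrite (eq_bigr (fun _ => 1%N)) ?sum1_card ?card_ffun ?card_ord //.
  move=> f _; suff -> : [forall a, cnt f a == b a] by []; apply/forallP => a; by rewrite b0 /cnt big_ord0.
rewrite sum_split big_distrl /=.
rewrite (eq_bigr (fun a => b a * n`!)%N); last first.
  move=> a _.
  case Ea: (b a) => [|m].
    rewrite big1 // => g _; case: forallP => // H; move: (H a); by rewrite cnt_consf Ea eqxx.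
  pose b' x := (b x - (a == x))%N.
  have Hb' : (\sum_x b' x)%N = n.
    rewrite -[n]/(n.+1.-1) -Hb (bigD1 a) //= [X in _ = (X).-1](bigD1 a) //=.
    rewrite /b' eqxx Ea subn1 addSn /=; congr addn; apply: eq_bigr => x.
    by rewrite eq_sym => /negPf ->; rewrite subn0.
  have Hp : (\prod_x (b x)`! = b a * \prod_x (b' x)`!)%N.
    rewrite (bigD1 a) //= (bigD1 a (P := predT)) //= /b' eqxx Ea mulnA subn1 /=.
    congr (_ * _)%N; apply: eq_bigr => x; by rewrite eq_sym => /negPf ->; rewrite subn0.
  rewrite Hp mulnCA -Ea -(IH _ Hb'); congr (_ * (_ * _))%N.
  apply: eq_bigr => g _; congr nat_of_bool; apply/forallP/forallP => H x; move: (H x);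
   rewrite /b' cnt_consf; case: (a =P x) => [<-|_] /= /eqP; rewrite ?Ea => ?; apply/eqP; lia.
by rewrite factS -Hb big_distrl.
Qed.
End Tuples.
Section Moments.
Variables (R : realFieldType) (L : nat).
Hypothesis L0 : (0 < L)%N.

Lemma sum_ffun_const n (x : R) : \sum_(f : {ffun 'I_n -> 'I_L}) x = x * L%:R ^+ n.
Proof. by rewrite sumr_const card_ffun !card_ord -natrX mulr_natr. Qed.

Lemma moment2 n (a0 : 'I_L) (x : R) :
  \sum_(f : {ffun 'I_n -> 'I_L}) (x + (cnt f a0)%:R) ^+ 2 =
  L%:R ^+ n * ((x + n%:R / L%:R) ^+ 2 + n%:R * (L%:R - 1) / L%:R ^+ 2).
Proof.
have L0' : L%:R != 0 :> R by rewrite pnatr_eq0 -lt0n.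
elim: n x => [|n IH] x.
  rewrite (eq_bigr (fun _ => x ^+ 2)) ?sum_ffun_const; last by move=> f _; rewrite /cnt big_ord0 addr0.
  by rewrite !expr0 !mul0r !addr0 mul1r mulr1.
rewrite (@sum_split L R 0 +%R n).
rewrite (eq_bigr (fun a => L%:R ^+ n * ((x + (a == a0)%:R + n%:R / L%:R) ^+ 2 + n%:R * (L%:R - 1) / L%:R ^+ 2))); last first.
  move=> a _; rewrite -IH; apply: eq_bigr => g _; by rewrite cnt_consf natrD addrA.
rewrite (bigD1 a0) //= eqxx.
rewrite (eq_bigr (fun _ => L%:R ^+ n * ((x + n%:R / L%:R) ^+ 2 + n%:R * (L%:R - 1) / L%:R ^+ 2))); last first.
  by move=> a /negPf ->; rewrite addr0.
rewrite sumr_const cardC1 card_ord -[_ *+ L.-1]mulr_natr.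
have -> : (L.-1)%:R = L%:R - 1 :> R by rewrite -[in RHS](prednK L0) -natr1 addrK.
rewrite [L%:R ^+ n.+1]exprS -natr1 /=; move: (L%:R ^+ n) => Y; field; exact: L0'.
Qed.
End Moments.
Section RBB.
Variables (R : realFieldType) (L N : nat).
Implicit Types eta : config L N.

Definition cres eta i : nat := (eta i - occ eta i)%N.
Lemma occ_le eta i : (occ eta i <= eta i)%N.
Proof. by rewrite /occ; case: (eta i) => [[|m] ?]. Qed.

Lemma sum_cres eta : (\sum_i cres eta i + Kocc eta)%N = ballsum eta.
Proof.
by rewrite /Kocc /ballsum -big_split; apply: eq_bigr => i _; rewrite /cres /= subnK ?occ_le.
Qed.

Definition gconf eta (f : {ffun 'I_(Kocc eta) -> 'I_L}) : config L N :=
  [ffun i => inord (cres eta i + cnt f i)].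

Lemma gbound eta (f : {ffun 'I_(Kocc eta) -> 'I_L}) i : ballsum eta = N -> (cres eta i + cnt f i <= N)%N.
Proof.
move=> HN; have E : (\sum_j (cres eta j + cnt f j))%N = N.
  by rewrite big_split /= sum_cnt sum_cres.
by rewrite -[X in (_ <= X)%N]E (bigD1 i) //= leq_addr.
Qed.

Lemma gval eta (f : {ffun 'I_(Kocc eta) -> 'I_L}) i : ballsum eta = N -> (gconf f i : nat) = (cres eta i + cnt f i)%N.
Proof. by move=> HN; rewrite ffunE inordK // ltnS gbound. Qed.

Lemma gconf_eq eta (f : {ffun 'I_(Kocc eta) -> 'I_L}) eta' : ballsum eta = N ->
  (gconf f == eta') = [forall i, (cres eta i + cnt f i)%N == eta' i].
Proof.
move=> HN; apply/eqP/forallP => [<- i | H]; first by rewrite gval.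
apply/ffunP => i; apply/val_inj; rewrite /= gval //; exact/eqP/H.
Qed.

Lemma rbbP_fiber eta eta' : ballsum eta = N -> (0 < L)%N ->
  rbb_P R eta eta' = (L%:R ^+ Kocc eta)^-1 *
    ((\sum_(f : {ffun 'I_(Kocc eta) -> 'I_L}) (gconf f == eta'))%N)%:R.
Proof.
move=> HN L0.
rewrite /rbb_P; case: ifP => [/andP [/forallP Hle /eqP Hsum] | Hc].
  have E : forall f : {ffun 'I_(Kocc eta) -> 'I_L},
    (gconf f == eta') = [forall i, cnt f i == (eta' i + occ eta i - eta i)%N].
    move=> f; rewrite gconf_eq //; apply/forallP/forallP => H i;
    move: (H i) (Hle i) (occ_le eta i); rewrite /cres => /eqP H1 H2 H3; apply/eqP; lia.
  have S : (\sum_(f : {ffun 'I_(Kocc eta) -> 'I_L}) (gconf f == eta'))%N =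
     (\sum_(f : {ffun 'I_(Kocc eta) -> 'I_L}) [forall i, cnt f i == (eta' i + occ eta i - eta i)%N])%N.
    apply: eq_bigr => f _; rewrite E; reflexivity.
  rewrite S -(fiber Hsum) natrM.
  rewrite mulfK; first exact: mulrC.
  by rewrite pnatr_eq0 -lt0n prodn_gt0 // => i; rewrite fact_gt0.
rewrite big1 ?mulr0 // => f _; case: eqP => // Hg; exfalso; move/negbT: Hc; apply/negP.
rewrite negbK; apply/andP; split.
  apply/forallP => i; move: (gval f i HN) (occ_le eta i); rewrite Hg /cres => H1 H2.
  rewrite H1; lia.
apply/eqP; rewrite -(sum_cnt f); apply: eq_bigr => i _.
move: (gval f i HN) (occ_le eta i); rewrite Hg /cres => H1 H2; rewrite H1; lia.
Qed.

Lemma link eta (h : config L N -> R) : ballsum eta = N -> (0 < L)%N ->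
  \sum_eta' rbb_P R eta eta' * h eta' =
  (L%:R ^+ Kocc eta)^-1 * \sum_(f : {ffun 'I_(Kocc eta) -> 'I_L}) h (gconf f).
Proof.
move=> HN L0.
under eq_bigr do rewrite rbbP_fiber // natr_sum -mulrA mulr_suml.
rewrite -mulr_sumr exchange_big /=; congr (_ * _); apply: eq_bigr => f _.
rewrite (bigD1 (gconf f)) //= eqxx mul1r big1 ?addr0 // => e.
by rewrite eq_sym => /negPf ->; rewrite mul0r.
Qed.

Lemma rowsum eta : ballsum eta = N -> (0 < L)%N -> \sum_eta' rbb_P R eta eta' = 1.
Proof.
move=> HN L0; under eq_bigr do rewrite -[rbb_P _ _ _]mulr1.
rewrite (link (fun _ => 1)) // sum_ffun_const // mul1r mulVf //.
by rewrite expf_neq0 // pnatr_eq0 -lt0n.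
Qed.

Lemma moment eta i0 : ballsum eta = N -> (0 < L)%N ->
  \sum_eta' rbb_P R eta eta' * ((eta' i0 : nat)%:R) ^+ 2 =
  ((cres eta i0)%:R + (Kocc eta)%:R / L%:R) ^+ 2 +
    (Kocc eta)%:R * (L%:R - 1) / L%:R ^+ 2.
Proof.
move=> HN L0; rewrite (link (fun e : config L N => ((e i0 : nat)%:R) ^+ 2)) //.
under eq_bigr do rewrite gval // natrD.
by rewrite moment2 // mulKf // expf_neq0 // pnatr_eq0 -lt0n.
Qed.

Lemma rbbP_ge0 eta eta' : 0 <= rbb_P R eta eta'.
Proof.
rewrite /rbb_P; case: ifP => // _.
by apply: divr_ge0; [apply: divr_ge0|]; rewrite ?ler0n ?exprn_ge0.
Qed.

End RBB.
Section Sym.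
Variables (R : realFieldType) (L N : nat).
Implicit Types eta : config L N.

Definition act (s : {perm 'I_L}) eta : config L N := [ffun i => eta (s i)].

Lemma act_inj s : injective (act s).
Proof.
move=> e1 e2 /ffunP H; apply/ffunP => i; move: (H (s^-1 i)%g); rewrite !ffunE permKV.
exact.
Qed.

Lemma occ_act s eta i : occ (act s eta) i = occ eta (s i).
Proof. by rewrite /occ ffunE. Qed.

Lemma Kocc_act s eta : Kocc (act s eta) = Kocc eta.
Proof.
rewrite /Kocc [RHS](reindex_inj (@perm_inj _ s)) /=; apply: eq_bigr => i _.
by rewrite occ_act.
Qed.

Lemma ballsum_act s eta : ballsum (act s eta) = ballsum eta.
Proof.
rewrite /ballsum [RHS](reindex_inj (@perm_inj _ s)) /=; apply: eq_bigr => i _.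
by rewrite ffunE.
Qed.

Lemma rbbP_act s e e' : rbb_P R (act s e) (act s e') = rbb_P R e e'.
Proof.
have C1 : [forall i, ((act s e i : nat) <= act s e' i + occ (act s e) i)%N] =
          [forall i, ((e i : nat) <= e' i + occ e i)%N].
  apply/forallP/forallP => H i.
    by move: (H (s^-1 i)%g); rewrite !ffunE occ_act permKV.
  by rewrite !ffunE occ_act; apply: H.
have C2 : (\sum_i (act s e' i + occ (act s e) i - act s e i))%N =
          (\sum_i (e' i + occ e i - e i))%N.
  rewrite [RHS](reindex_inj (@perm_inj _ s)) /=; apply: eq_bigr => i _.
  by rewrite !ffunE occ_act.
have C3 : (\prod_i (act s e' i + occ (act s e) i - act s e i)`!)%N =
          (\prod_i (e' i + occ e i - e i)`!)%N.
  rewrite [RHS](reindex_inj (@perm_inj _ s)) /=; apply: eq_bigr => i _.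
  by rewrite !ffunE occ_act.
by rewrite /rbb_P C1 C2 C3 Kocc_act.
Qed.

Lemma stat_act s (pi : config L N -> R) : rbb_stationary pi ->
  rbb_stationary (fun e => pi (act s e)).
Proof.
case=> p0 ps p1 pinv; split.
- by move=> e; apply: p0.
- by move=> e H; apply: ps; rewrite ballsum_act.
- by rewrite -p1; symmetry; exact: (reindex_inj (@act_inj s)).
- move=> e'; rewrite pinv.
  rewrite (reindex_inj (@act_inj s)) /=; apply: eq_bigr => e _.
  by rewrite rbbP_act.
Qed.
End Sym.
Section Unique.
Variables (R : realFieldType) (L N : nat) (i0 : 'I_L).
Implicit Types eta : config L N.

Lemma L0 : (0 < L)%N. Proof. by case: i0 => i /= /(leq_ltn_trans (leq0n i)). Qed.

Definition stepF eta : config L N :=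
  [ffun i => inord (if i == i0 then (cres eta i + Kocc eta)%N else cres eta i)].

Lemma cres_le eta i : (cres eta i <= eta i)%N.
Proof. by rewrite /cres leq_subr. Qed.

Lemma stepF_val eta i : ballsum eta = N ->
  (stepF eta i : nat) = if i == i0 then (cres eta i + Kocc eta)%N else cres eta i.
Proof.
move=> HN; rewrite ffunE inordK //; case: ifP => _; rewrite ltnS.
  rewrite -[X in (_ <= X)%N]HN -sum_cres leq_add2r.
  by rewrite (bigD1 i) //= leq_addr.
rewrite -ltnS; exact: leq_ltn_trans (cres_le eta i) (ltn_ord (eta i)).
Qed.

Lemma stepF_sum eta : ballsum eta = N -> ballsum (stepF eta) = N.
Proof.
move=> HN; transitivity (\sum_i cres eta i + Kocc eta)%N; last by rewrite sum_cres.
rewrite /ballsum; under eq_bigr => i _ do rewrite stepF_val //.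
rewrite (bigD1 i0) //= eqxx.
rewrite [in RHS](bigD1 i0) //= addnAC; congr (_ + _ + _)%N; apply: eq_bigr => i /negPf -> //.
Qed.

Lemma P_step eta : ballsum eta = N -> 0 < rbb_P R eta (stepF eta).
Proof.
move=> HN; rewrite /rbb_P ifT; last first.
  apply/andP; split.
    apply/forallP => i; rewrite stepF_val //; move: (occ_le eta i); rewrite /cres.
    case: ifP => _ ?; lia.
  apply/eqP; rewrite (eq_bigr (fun i => if i == i0 then Kocc eta else 0%N)).
    by rewrite (bigD1 i0) //= eqxx big1 ?addn0 // => i /negPf ->.
  move=> i _; rewrite stepF_val //; move: (occ_le eta i); rewrite /cres.
  case: ifP => _ ?; lia.
apply: divr_gt0; last by rewrite exprn_gt0 // ltr0n L0.
apply: divr_gt0; rewrite ltr0n ?fact_gt0 //.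
by rewrite prodn_gt0 // => i; rewrite fact_gt0.
Qed.

Lemma iter_sum n eta : ballsum eta = N -> ballsum (iter n stepF eta) = N.
Proof. by move=> HN; elim: n => //= n IH; rewrite stepF_sum. Qed.

Lemma iter_val n eta i : ballsum eta = N -> i != i0 ->
  (iter n stepF eta i : nat) = (eta i - n)%N.
Proof.
move=> HN /negPf Hi; elim: n => [|n IH] /=; first by rewrite subn0.
rewrite stepF_val ?iter_sum // Hi /cres /occ IH subnS.
by case: (eta i - n)%N => // m; rewrite subn1.
Qed.

Definition sstar : config L N := [ffun i => if i == i0 then ord_max else ord0].

Lemma iter_star eta : ballsum eta = N -> iter N stepF eta = sstar.
Proof.
move=> HN; apply/ffunP => i; apply/val_inj; rewrite ffunE /=.
case: ifP => [/eqP -> | /negbT Hi].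
  have H := iter_sum N HN; move: H; rewrite /ballsum (bigD1 i0) //= big1 ?addn0 //.
  move=> j Hj; rewrite iter_val //; apply/eqP; rewrite subn_eq0 -ltnS; exact: ltn_ord.
rewrite iter_val //; apply/eqP; rewrite subn_eq0 -ltnS; exact: ltn_ord.
Qed.
End Unique.
Lemma norm_sum_eq (R : realFieldType) (I : finType) (a : I -> R) :
  `|\sum_i a i| = \sum_i `|a i| -> (forall i, 0 <= a i) \/ (forall i, a i <= 0).
Proof.
move=> H; have [Hs|Hs] := lerP 0 (\sum_i a i).
  left => i.
  have H0 : \sum_i (`|a i| - a i) = 0 by rewrite sumrB -H ger0_norm // subrr.
  have P0 : forall j, true -> 0 <= `|a j| - a j.
    by move=> j _; rewrite subr_ge0 ler_norm.
  have E := psumr_eq0P P0 H0. have := E i.  have := normr_ge0 (a i); lra.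
right => i.
have H0 : \sum_i (`|a i| + a i) = 0 by rewrite big_split /= -H ltr0_norm // addNr.
have P0 : forall j, true -> 0 <= `|a j| + a j.
  by move=> j _; have := ler_norm (- a j); rewrite normrN; lra.
have E := psumr_eq0P P0 H0. have := E i.  have := normr_ge0 (a i); lra.
Qed.

Section Unique2.
Variables (R : realFieldType) (L N : nat) (i0 : 'I_L).
Implicit Types eta : config L N.

Lemma chain (m : config L N -> R) :
  (forall y, m y = \sum_x m x * rbb_P R x y) ->
  (forall y, `|\sum_x m x * rbb_P R x y| = \sum_x `|m x * rbb_P R x y|) ->
  (forall x, ballsum x != N -> m x = 0) ->
  forall x, 0 < m x -> 0 < m (sstar N i0).
Proof.
move=> hi hn hs x hx.
have prop : forall x y, 0 < m x -> 0 < rbb_P R x y -> 0 < m y.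
  move=> x1 y h1 h2; case: (norm_sum_eq (hn y)) => H.
    rewrite hi (bigD1 x1) //=; apply: lt_le_trans (_ : 0 < m x1 * rbb_P R x1 y) _.
      exact: mulr_gt0.
    by rewrite lerDl; apply: sumr_ge0 => z _; apply: H.
  by have := H x1; rewrite leNgt mulr_gt0.
have HN : ballsum x = N.
  by apply/eqP; apply: contraTT hx => /hs ->; rewrite ltxx.
rewrite -(iter_star i0 HN).
have : forall n, 0 < m (iter n (stepF i0) x).
  elim=> [|n IH] //=; apply: prop IH _; apply: P_step; exact: iter_sum.
exact.
Qed.

Lemma stat_unique (pi1 pi2 : config L N -> R) :
  rbb_stationary pi1 -> rbb_stationary pi2 -> forall e, pi1 e = pi2 e.
Proof.
case=> p1 s1 t1 v1 [p2 s2 t2 v2].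
pose mu e := pi1 e - pi2 e.
have inv : forall y, mu y = \sum_x mu x * rbb_P R x y.
  move=> y; rewrite /mu v1 v2 -sumrB; apply: eq_bigr => x _; by rewrite mulrBl.
have supp : forall x, ballsum x != N -> mu x = 0.
  by move=> x H; rewrite /mu s1 // s2 // subrr.
have rows : forall x, `|mu x| * \sum_y rbb_P R x y = `|mu x|.
  move=> x; case: (eqVneq (ballsum x) N) => H.
    by rewrite (rowsum R H (L0 i0)) mulr1.
  by rewrite supp // normr0 mul0r.
have neq : forall y, `|\sum_x mu x * rbb_P R x y| = \sum_x `|mu x * rbb_P R x y|.
  pose d y := \sum_x `|mu x| * rbb_P R x y - `|mu y|.
  have d0 : forall y, true -> 0 <= d y.
    move=> y _; rewrite /d subr_ge0 {1}inv; apply: le_trans (ler_norm_sum _ _ _) _.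
    by apply: ler_sum => x _; rewrite normrM (ger0_norm (rbbP_ge0 R _ _)).
  have ds : \sum_y d y = 0.
    rewrite /d sumrB exchange_big /=.
    rewrite (eq_bigr (fun x => `|mu x|)) ?subrr // => x _; by rewrite -mulr_sumr rows.
  move=> y; have E := psumr_eq0P d0 ds; move: (E y isT); rewrite /d => /eqP.
  rewrite subr_eq0 => /eqP E2.
  rewrite [RHS](eq_bigr (fun x => `|mu x| * rbb_P R x y)); last first.
    by move=> x _; rewrite normrM (ger0_norm (rbbP_ge0 R _ _)).
  by rewrite E2 -inv.
have pos : forall x, 0 < mu x -> 0 < mu (sstar N i0).
  move=> x; exact: (chain inv neq supp).
have neg : forall x, mu x < 0 -> mu (sstar N i0) < 0.
  move=> x hx; rewrite -oppr_gt0; move: hx; rewrite -oppr_gt0.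
  apply: (chain (m := fun e => - mu e)).
  - by move=> y; rewrite inv -sumrN; apply: eq_bigr => z _; rewrite mulNr.
  - move=> y; rewrite [in LHS](eq_bigr (fun x => - (mu x * rbb_P R x y))); last first.
      by move=> z _; rewrite mulNr.
    rewrite sumrN normrN neq; apply: eq_bigr => z _; by rewrite mulNr normrN.
  - by move=> z /supp ->; rewrite oppr0.
have Hsum0 : \sum_x mu x = 0 by rewrite /mu sumrB t1 t2 subrr.
move=> e; apply/eqP; rewrite -subr_eq0; apply/eqP; rewrite -/(mu e).
case: (boolP [exists x, 0 < mu x]) => [/existsP [x hx] | /existsPn hn].
  have ge : forall y, true -> 0 <= mu y.
    move=> y _; rewrite leNgt; apply/negP => /neg; rewrite ltNge le_eqVlt (pos x hx) orbT.
    by [].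
  have E := psumr_eq0P ge Hsum0; exact: (E e isT).
have ge : forall y, true -> 0 <= - mu y.
  by move=> y _; rewrite oppr_ge0 leNgt; apply: hn.
have Hs' : \sum_x - mu x = 0 by rewrite sumrN Hsum0 oppr0.
by apply/eqP; rewrite -oppr_eq0; apply/eqP; have E := psumr_eq0P ge Hs'; exact: (E e isT).
Qed.
End Unique2.
Section ExpLemmas.
Variables (R : realFieldType) (L N : nat) (pi : config L N -> R).

Lemma Exp_ext f g : (forall e, f e = g e) -> Exp pi f = Exp pi g.
Proof. by move=> H; apply: eq_bigr => e _; rewrite H. Qed.

Lemma ExpD f g : Exp pi (fun e => f e + g e) = Exp pi f + Exp pi g.
Proof. by rewrite /Exp -big_split; apply: eq_bigr => e _; rewrite mulrDr. Qed.

Lemma ExpZ c f : Exp pi (fun e => c * f e) = c * Exp pi f.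
Proof. by rewrite /Exp mulr_sumr; apply: eq_bigr => e _; rewrite mulrCA. Qed.

Lemma ExpS (I : finType) (F : I -> config L N -> R) :
  Exp pi (fun e => \sum_i F i e) = \sum_i Exp pi (F i).
Proof.
rewrite /Exp exchange_big /=; apply: eq_bigr => e _; by rewrite mulr_sumr.
Qed.

Lemma Exp_supp f g : (forall e, ballsum e != N -> pi e = 0) ->
  (forall e, ballsum e = N -> f e = g e) -> Exp pi f = Exp pi g.
Proof.
move=> hs H; apply: eq_bigr => e _; case: (eqVneq (ballsum e) N) => He.
  by rewrite H.
by rewrite hs // !mul0r.
Qed.

Lemma Exp_const c : \sum_e pi e = 1 -> Exp pi (fun _ => c) = c.
Proof. by move=> H; rewrite /Exp -mulr_suml H mul1r. Qed.
End ExpLemmas.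

Unset Implicit Arguments.

Theorem mainTheorem8 (R : realFieldType) (L N : nat) (r : R)
  (hL : (2 <= L)%N) (hr : 0 < r) (hrL : r * L%:R = N%:R)
  (i1 i2 : 'I_L) (hi1 : val i1 = 0%N) (hi2 : val i2 = 1%N)
  (pi : config L N -> R) (hpi : rbb_stationary pi) :
  let w1 := fun eta : config L N => (occ eta i1)%:R : R in
  let w2 := fun eta : config L N => (occ eta i2)%:R : R in
  Exp pi (fun eta => w1 eta * w2 eta) - Exp pi w1 * Exp pi w2
  = - (Exp pi w1) ^+ 2
    + 2 * Exp pi w1 * (((r + 1) * L%:R - 1) / (L%:R - 1))
    - 2 * r * (L%:R / (L%:R - 1)).
Proof.
move=> w1 w2; rewrite /w1 /w2 {w1 w2}.
have hpi' := hpi; case: hpi' => p0 ps p1 pinv.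
have L0 : (0 < L)%N by apply: leq_trans hL.
have i12 : i1 != i2 by apply/eqP => /(congr1 val); rewrite hi1 hi2.
set l := L%:R : R.
have l0 : l != 0 by rewrite /l pnatr_eq0 -lt0n.
have l1 : l - 1 != 0.
  have : 1 < l by rewrite /l ltr1n.
  by move=> h; apply/eqP => h2; move: h; rewrite -subr_gt0 h2 ltxx.
pose W i (e : config L N) := (occ e i)%:R : R.
pose X i (e : config L N) := (e i : nat)%:R : R.
pose Kf (e : config L N) := (Kocc e)%:R : R.
have KW : forall e, Kf e = \sum_i W i e by move=> e; rewrite /Kf /Kocc natr_sum.
have sym : forall (s : {perm 'I_L}) e, pi (act s e) = pi e.
  by move=> s e; apply: (stat_unique i1 (stat_act s hpi) hpi).
have Eact : forall (s : {perm 'I_L}) f, Exp pi (fun e => f (act s e)) = Exp pi f.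
  move=> s f; rewrite /Exp; under eq_bigr => e _ do rewrite -(sym s e).
  symmetry; exact: (reindex_inj (@act_inj L N s)).
set p := Exp pi (W i1).
have EW : forall i, Exp pi (W i) = p.
  move=> i; rewrite /p -(Eact (tperm i1 i) (W i1)); apply: Exp_ext => e.
  by rewrite /W occ_act tpermL.
have EK : Exp pi Kf = l * p.
  rewrite (@Exp_ext _ _ _ pi _ _ KW) ExpS (eq_bigr (fun _ => p)); last by move=> i _; apply: EW.
  by rewrite sumr_const card_ord mulr_natl.
have EX : forall i, Exp pi (X i) = Exp pi (X i1).
  move=> i; rewrite -(Eact (tperm i1 i) (X i1)); apply: Exp_ext => e.
  by rewrite /X ffunE tpermL.
have EXr : Exp pi (X i1) = r.
  have H : Exp pi (fun e => \sum_i X i e) = N%:R.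
    rewrite (Exp_supp (g := fun _ => N%:R)) ?Exp_const //.
    by move=> e He; rewrite /X -natr_sum; congr (_%:R); exact: He.
  move: H; rewrite ExpS (eq_bigr (fun _ => Exp pi (X i1))); last by move=> i _; apply: EX.
  rewrite sumr_const card_ord -hrL => H.
  by apply: (mulfI l0); rewrite /l [LHS]mulr_natl H mulrC.
have Kact : forall s e, Kf (act s e) = Kf e by move=> s e; rewrite /Kf Kocc_act.
have EXKi : forall i, Exp pi (fun e => X i e * Kf e) = Exp pi (fun e => X i1 e * Kf e).
  move=> i; rewrite -(Eact (tperm i1 i) (fun e => X i1 e * Kf e)); apply: Exp_ext => e /=.
  by rewrite Kact /X ffunE tpermL.
have EXK : Exp pi (fun e => X i1 e * Kf e) = r * (l * p).
  have H : Exp pi (fun e => \sum_i (X i e * Kf e)) = N%:R * (l * p).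
    rewrite -EK -(@ExpZ _ _ _ pi N%:R Kf); apply: (Exp_supp ps) => e He.
    rewrite -mulr_suml /X -natr_sum; congr (_ * _); congr (_%:R); exact: He.
  move: H; rewrite ExpS (eq_bigr (fun _ => Exp pi (fun e => X i1 e * Kf e))); last first.
    by move=> i _; apply: EXKi.
  rewrite sumr_const card_ord => H.
  by apply: (mulfI l0); rewrite /l [LHS]mulr_natl H -hrL -/l; ring.
set q := Exp pi (fun e => W i1 e * W i2 e).
have EWW : forall j, j != i1 -> Exp pi (fun e => W i1 e * W j e) = q.
  move=> j hj; rewrite /q -(Eact (tperm i2 j) (fun e => W i1 e * W i2 e)).
  apply: Exp_ext => e /=; rewrite /W !occ_act tpermL tpermD //.
  by rewrite eq_sym.
have WW : forall e, W i1 e * W i1 e = W i1 e.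
  by move=> e; rewrite /W /occ; case: (_ < _)%N; rewrite ?mulr1 ?mulr0.
have Lm1 : (L.-1)%:R = l - 1 by rewrite /l -[in RHS](prednK L0) -natr1 addrK.
have EWK : Exp pi (fun e => W i1 e * Kf e) = p + (l - 1) * q.
  rewrite (@Exp_ext _ _ _ pi _ (fun e => \sum_j W i1 e * W j e)); last first.
    by move=> e; rewrite KW mulr_sumr.
  rewrite ExpS (bigD1 i1) //= (@Exp_ext _ _ _ pi _ (W i1)) //.
  rewrite (eq_bigr (fun _ => q)); last by move=> j hj; apply: EWW.
  by rewrite sumr_const cardC1 card_ord -[_ *+ L.-1]mulr_natr Lm1 mulrC.
have EKK : Exp pi (fun e => Kf e * Kf e) = l * (p + (l - 1) * q).
  rewrite (@Exp_ext _ _ _ pi _ (fun e => \sum_i W i e * Kf e)); last first.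
    by move=> e; rewrite {1}KW mulr_suml.
  rewrite ExpS (eq_bigr (fun _ => p + (l - 1) * q)); last first.
    move=> i _; rewrite -EWK -(Eact (tperm i1 i) (fun e => W i1 e * Kf e)).
    by apply: Exp_ext => e /=; rewrite Kact /W occ_act tpermL.
  by rewrite sumr_const card_ord -mulr_natl.
have XW : forall e, X i1 e * W i1 e = X i1 e.
  move=> e; rewrite /X /W /occ; case: (ltnP 0 (e i1)) => h /=; first by rewrite mulr1.
  by move: h; rewrite leqn0 => /eqP ->; rewrite mul0r.
have Est : Exp pi (fun e => X i1 e ^+ 2) =
   Exp pi (fun e => ((cres e i1)%:R + Kf e / l) ^+ 2 + Kf e * (l - 1) / l ^+ 2).
  rewrite {1}/Exp; under eq_bigr => e' _ do rewrite pinv mulr_suml.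
  rewrite exchange_big /=; apply: eq_bigr => e _.
  case: (eqVneq (ballsum e) N) => He.
    under eq_bigr => e' _ do rewrite -mulrA.
    by rewrite -mulr_sumr /X (moment R i1 He L0).
  rewrite ps // mul0r; apply: big1 => e' _; by rewrite !mul0r.
pose c1 := (l - 1) / l ^+ 2.
pose c2 := 1 / l ^+ 2.
have Gexp : forall e, ((cres e i1)%:R + Kf e / l) ^+ 2 + Kf e * (l - 1) / l ^+ 2 =
   X i1 e ^+ 2 + (-2) * X i1 e + W i1 e + (2 / l) * (X i1 e * Kf e)
   + (- (2 / l)) * (W i1 e * Kf e) + c1 * Kf e + c2 * (Kf e * Kf e).
  move=> e; have hc : (cres e i1)%:R = X i1 e - W i1 e by rewrite /cres natrB ?occ_le.
  rewrite hc /c1 /c2; move: (XW e) (WW e).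
  move: (X i1 e) (W i1 e) (Kf e) => x w k hxw hww.
  have -> : x ^+ 2 + -2 * x + w = x ^+ 2 - 2 * (x * w) + w * w.
    by rewrite hxw hww; ring.
  by field.
have := Est; rewrite (@Exp_ext _ _ _ pi _ _ Gexp) !ExpD !ExpZ EXr EXK EWK EK EKK -/p.
rewrite (EW i2).
move: (Exp pi (fun e => X i1 e ^+ 2)) => A.
pose T := (2 * p * ((r + 1) * l - 1) - 2 * r * l - (l - 1) * q) / l.
have E1 : A + -2 * r + p + 2 / l * (r * (l * p)) + - (2 / l) * (p + (l - 1) * q) +
    c1 * (l * p) + c2 * (l * (p + (l - 1) * q)) = A + T.
  by rewrite /c1 /c2 /T; field.
rewrite E1 => H.
have T0 : T = 0 by apply: (addrI A); rewrite addr0 -H.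
have Hnum : 2 * p * ((r + 1) * l - 1) - 2 * r * l - (l - 1) * q = 0.
  by move/eqP: T0; rewrite /T mulf_eq0 invr_eq0 (negbTE l0) orbF => /eqP.
have Hq' : q * (l - 1) = 2 * p * ((r + 1) * l - 1) - 2 * r * l.
  apply/eqP; rewrite -subr_eq0; apply/eqP; rewrite -[RHS]oppr0 -Hnum; ring.
have hq : q = (2 * p * ((r + 1) * l - 1) - 2 * r * l) / (l - 1).
  by rewrite -Hq' mulfK.
rewrite hq; field; exact: l1.
Qed.
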